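(* Let $X$ be a connected weighted bipartite graph and let $u$ be a vertex of $X$ such that $0\notin\Phi_{\mathbf e_u}$. Then $u$ is not sedentary, i.e. $\inf_{t>0}|U(t)_{u,u}|=0$.
   Context: All graphs are simple, loopless, connected and undirected, with nonzero real edge weights; $A=A(X)$ is the weighted adjacency matrix ($A_{u,v}=\omega_{u,v}$, the weight of edge $\{u,v\}$, and $0$ for non-adjacent pairs). Write the spectral decomposition $A=\sum_{\lambda}\lambda E_\lambda$ over the distinct eigenvalues $\lambda$ of $A$, where $E_\lambda$ is the orthogonal projection onto the $\lambda$-eigenspace. The transition matrix is $U(t)=e^{itA}$, $t\in\mathbb R$. The eigenvalue support of $u$ is $\Phi_{\mathbf e_u}=\{\lambda: E_\lambda\mathbf e_u\neq 0\}$. A vertex $u$ is sedentary if $\inf_{t>0}|U(t)_{u,u}|\ge C$ for some constant $0<C\le 1$, and not sedentary if $\inf_{t>0}|U(t)_{u,u}|=0$. *)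

(* Defs.v *)
From HB Require Import structures.
From mathcomp Require Import all_boot all_order all_algebra.
From mathcomp Require Import all_classical all_reals all_analysis.
Set Implicit Arguments. Unset Strict Implicit. Unset Printing Implicit Defensive.
Import Order.TTheory GRing.Theory Num.Theory.
Local Open Scope ring_scope.
Local Open Scope classical_set_scope.

Section Defs.
Variable R : realType.
Variable n : nat.
Implicit Types (A : 'M[R]_n) (u v : 'I_n).

(* A weighted simple loopless undirected graph on vertex set 'I_n, given by its
   weighted adjacency matrix: symmetric, zero diagonal; {i,j} is an edge iff
   A i j != 0 (so edge weights are nonzero reals). *)
Definition weighted_graph A : Prop := A^T = A /\ forall i, A i i = 0.

Definition adj A : rel 'I_n := fun i j => A i j != 0.

Definition connected_graph A : Prop := forall i j, connect (adj A) i j.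

Definition bipartite A : Prop :=
  exists c : 'I_n -> bool, forall i j, adj A i j -> c i != c j.

(* k-th power of a square matrix (valid for every n, including n = 0). *)
Definition mxpow A (k : nat) : 'M[R]_n := iter k (mulmx A) 1%:M.

Definition ipow_re (k : nat) : R := if odd k then 0 else (-1) ^+ k./2.
Definition ipow_im (k : nat) : R := if odd k then (-1) ^+ k./2 else 0.

(* U(t) = e^{itA} = \sum_k (i t)^k / k! A^k, entrywise real and imaginary parts *)
Definition U_re A (t : R) u v : R :=
  limn (fun N => \sum_(0 <= k < N) ipow_re k * t ^+ k / k`!%:R * mxpow A k u v).
Definition U_im A (t : R) u v : R :=
  limn (fun N => \sum_(0 <= k < N) ipow_im k * t ^+ k / k`!%:R * mxpow A k u v).

Definition U_abs A (t : R) u v : R :=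
  Num.sqrt (U_re A t u v ^+ 2 + U_im A t u v ^+ 2).

Definition evec u : 'cV[R]_n := delta_mx u 0.

Definition dotv (x y : 'cV[R]_n) : R := \sum_i x i 0 * y i 0.

(* p = E_lam v : p lies in the lam-eigenspace of A and v - p is orthogonal to it *)
Definition is_eig_proj A (lam : R) (v p : 'cV[R]_n) : Prop :=
  A *m p = lam *: p /\
  forall x : 'cV[R]_n, A *m x = lam *: x -> dotv (v - p) x = 0.

(* eigenvalue support Phi_{e_u} = { lam : E_lam e_u <> 0 } *)
Definition eig_support A u : set R :=
  [set lam | exists p, is_eig_proj A lam (evec u) p /\ p != 0].

End Defs.

(* Main.v *)
Require Import Defs.
From HB Require Import structures.
From mathcomp Require Import all_boot all_order all_algebra.
From mathcomp Require Import all_classical all_reals all_analysis.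
From mathcomp Require Import complex.
From mathcomp Require Import lra ring.
Import Order.TTheory GRing.Theory Num.Theory.
Import numFieldNormedType.Exports.
Local Open Scope ring_scope.
Section PartB.
Variable R : realType.

Definition Sk (a : R) (k : nat) : R :=
  1 + 2 * \sum_(0 <= m < k) cos ((m.+1)%:R * (2 * a)).

Lemma Sk_eq (a : R) k : sin a * Sk a k = sin ((2 * k%:R + 1) * a).
Proof.
elim: k => [|k IH].
  rewrite /Sk big_geq //.
  have -> : (2 * (0%N)%:R + 1) * a = a by rewrite mulr0n; ring.
  ring.
have E : sin a * Sk a k.+1 = sin a * Sk a k + 2 * sin a * cos ((k.+1)%:R * (2 * a)).
  by rewrite /Sk big_nat_recr //=; ring.
rewrite E IH.
set y := (k.+1)%:R * (2 * a).
have -> : (2 * k%:R + 1) * a = y - a by rewrite /y -natr1; ring.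
have -> : (2 * (k.+1)%:R + 1) * a = y + a by rewrite /y; ring.
rewrite sinB sinD; ring.
Qed.

Definition Kn (a : R) (N : nat) : R := \sum_(0 <= k < N) Sk a k.

Lemma Kn_eq (a : R) N : 2 * sin a ^+ 2 * Kn a N = 1 - cos ((2 * N%:R) * a).
Proof.
elim: N => [|N IH].
  rewrite /Kn big_geq //.
  have -> : (2 * (0%N)%:R) * a = 0 by rewrite mulr0n; ring.
  rewrite cos0; ring.
have E : 2 * sin a ^+ 2 * Kn a N.+1 = 2 * sin a ^+ 2 * Kn a N + 2 * sin a * (sin a * Sk a N).
  by rewrite /Kn big_nat_recr //=; ring.
rewrite E IH Sk_eq.
set y := (2 * N%:R + 1) * a.
have -> : (2 * N%:R) * a = y - a by rewrite /y; ring.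
have -> : (2 * (N.+1)%:R) * a = y + a by rewrite /y -natr1; ring.
rewrite cosB cosD; ring.
Qed.

Lemma Kn_le (a : R) N : sin a != 0 -> Kn a N <= (sin a ^+ 2)^-1.
Proof.
move=> s0.
have sp : 0 < sin a ^+ 2 by rewrite exprn_even_gt0.
have := Kn_eq a N.
have := cos_geN1 ((2 * N%:R) * a).
move=> h1 h2.
rewrite -(ler_pM2l sp) mulfV ?gt_eqF //.
nra.
Qed.

End PartB.
Arguments Sk {R}. Arguments Kn {R}. Arguments Kn_le {R}. Arguments Sk_eq {R}. Arguments Kn_eq {R}.
Section PartB2.
Variable R : realType.

Lemma cont_g (m : nat) (w d : 'I_m -> R) :
  continuous (fun t : R => \sum_j w j * cos (t * d j)).
Proof.
apply: (continuous_big (op := +%R) (x0 := (0:R)) (P := xpredT)).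
  exact: add_continuous.
move=> j _ x.
apply: cvgMl_tmp.
apply: (@continuous_comp _ _ _ (fun t : R => t * d j) cos).
  by apply: cvgMr_tmp; exact: cvg_id.
exact: continuous_cos.
Qed.

Lemma sin_ne0 (a : R) : a != 0 -> `|a| < 2 -> sin a != 0.
Proof.
move=> a0 a2.
case: (ltgtP a 0) => [aneg|apos|]; last by move=> e; rewrite e eqxx in a0.
  have : 0 < sin (- a).
    apply: sin2_gt0; rewrite oppr_gt0 aneg /= -(ltr0_norm aneg) //.
  by rewrite sinN oppr_gt0 => h; rewrite lt_eqF.
have : 0 < sin a by apply: sin2_gt0; rewrite apos /= -(gtr0_norm apos).
by move=> h; rewrite gt_eqF.
Qed.
End PartB2.
Section PartB3.
Variable R : realType.

Lemma g_zero (m : nat) (w d : 'I_m -> R) :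
  (forall j, 0 <= w j) -> \sum_j w j = 1 -> (forall j, d j = 0 -> w j = 0) ->
  exists2 c : R, 0 < c & \sum_j w j * cos (c * d j) = 0.
Proof.
move=> w0 w1 wd.
set g := fun t : R => \sum_j w j * cos (t * d j).
have g0 : g 0 = 1 by rewrite /g; under eq_bigr do rewrite mul0r cos0 mulr1.
set D := \sum_j `|d j|.
have D0 : 0 <= D by rewrite /D sumr_ge0.
set h := (1 + D)^-1.
have h0 : 0 < h by rewrite /h invr_gt0; lra.
set a := fun j => h * d j / 2.
have hdj j : `|h * d j| < 1.
  have dD : `|d j| <= D by rewrite /D (bigD1 j) //= lerDl sumr_ge0.
  rewrite normrM (gtr0_norm h0) /h mulrC ltr_pdivrMr; last lra.
  lra.
have sa j : w j != 0 -> sin (a j) != 0.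
  move=> wj; apply: sin_ne0.
    have dj0 : d j != 0 by apply/eqP => /wd /eqP; rewrite (negPf wj).
    rewrite /a; apply: mulf_neq0; first by apply: mulf_neq0 => //; rewrite gt_eqF.
    by rewrite invr_eq0 pnatr_eq0.
  rewrite /a normrM normfV normr_nat; have := hdj j; lra.
set Cst := \sum_j w j / sin (a j) ^+ 2.
have C0 : 0 <= Cst.
  by rewrite /Cst sumr_ge0 // => j _; rewrite divr_ge0 // sqr_ge0.
set N := Num.Def.archi_bound Cst.
have CN : Cst < N%:R by exact: archi_boundP.
have upper : \sum_j w j * Kn (a j) N <= Cst.
  rewrite /Cst; apply: ler_sum => j _.
  have [/eqP -> | wj] := boolP (w j == 0); first by rewrite !mul0r.
  by rewrite ler_wpM2l //; apply: Kn_le; exact: sa.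
have HS k : \sum_j w j * Sk (a j) k
    = 1 + 2 * \sum_(0 <= m < k) g (m.+1%:R * h).
  rewrite /Sk.
  under eq_bigr do rewrite mulrDr mulr1.
  rewrite big_split /= w1; congr (_ + _).
  rewrite /g exchange_big big_distrr /=; apply: eq_bigr => j _.
  rewrite mulrCA; congr (2 * _); rewrite big_distrr /=; apply: eq_bigr => i _.
  congr (w j * cos _); rewrite /a; field.
  by [].
have [kk gneg] : exists k : nat, g (k.+1%:R * h) < 0.
  apply: contrapT => H.
  have gpos k1 : 0 <= g (k1.+1%:R * h).
    by rewrite leNgt; apply/negP => hk; apply: H; exists k1.
  have HS1 k2 : 1 <= \sum_j w j * Sk (a j) k2.
    rewrite HS lerDl mulr_ge0 // sumr_ge0 // => i _.
  have : N%:R <= \sum_j w j * Kn (a j) N.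
    rewrite /Kn; under eq_bigr do rewrite big_distrr /=.
    rewrite exchange_big /=.
    have -> : (N%:R : R) = \sum_(0 <= i < N) (1 : R).
      by rewrite sumr_const_nat subn0.
    by apply: ler_sum => i _; exact: HS1.
  lra.
set t1 := kk.+1%:R * h.
have t10 : 0 < t1 by rewrite /t1 mulr_gt0.
have [c cin gc] : exists2 c, c \in `[0, t1] & g c = 0.
  apply: IVT; first exact: ltW.
    exact/continuous_subspaceT/cont_g.
  rewrite g0 /=; apply/andP; split.
    by rewrite ge_min (ltW gneg) orbT.
  by rewrite le_max ler01.
exists c => //.
move: cin; rewrite in_itv /= => /andP [c0 _].
rewrite lt_neqAle c0 andbT; apply/eqP => e.
by move: gc; rewrite -e g0 => /eqP; rewrite oner_eq0.
Qed.
End PartB3.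
Arguments g_zero {R m w d}.
Section PartA.
Local Open Scope classical_set_scope.
Variable R : realType.
Variable n : nat.
Implicit Types (A : 'M[R]_n).

Lemma mxpowS A k : mxpow A k.+1 = A *m mxpow A k.
Proof. by []. Qed.

Lemma mxpow_sign A (c : 'I_n -> bool) :
  (forall i j, adj A i j -> c i != c j) ->
  forall k i j, (if c i then 1 else -1) * (if c j then 1 else -1) * mxpow A k i j
       = (-1) ^+ k * mxpow A k i j :> R.
Proof.
move=> hc; elim=> [|k IH] i j.
  rewrite /mxpow /= !mxE expr0 mul1r.
  case: (eqVneq i j) => [->|nij]; first by case: (c j); rewrite /= ?mulr1n; ring.
  by rewrite mulr0n mulr0.
rewrite mxpowS !mxE big_distrr /= big_distrr /=; apply: eq_bigr => l _.
have [Ail|Ail] := eqVneq (A i l) 0; first by rewrite Ail !mul0r !mulr0.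
have cil : c i != c l by apply: hc; rewrite /adj Ail.
have := IH l j.
case: (c i) (c l) cil => [] [] //= _ h.
  have -> : 1 * (if c j then 1 else -1) * (A i l * mxpow A k l j)
    = - (A i l * ((-1) * (if c j then 1 else -1) * mxpow A k l j)) by ring.
  by rewrite h exprS; ring.
have -> : -1 * (if c j then 1 else -1) * (A i l * mxpow A k l j)
    = A i l * (1 * (if c j then 1 else -1) * mxpow A k l j) * (-1) by ring.
by rewrite h exprS; ring.
Qed.

Lemma mxpow_odd A u : bipartite A -> forall k, odd k -> mxpow A k u u = 0.
Proof.
move=> [c hc] k ok.
have := mxpow_sign A c hc k u u.
have -> : (if c u then 1 else -1) * (if c u then 1 else -1) = 1 :> R.
  by case: (c u); ring.
rewrite -signr_odd ok expr1 mul1r => h.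
lra.
Qed.

Lemma U_im0 A u t : bipartite A -> U_im A t u u = 0.
Proof.
move=> bip; rewrite /U_im.
have -> : (fun N => \sum_(0 <= k < N) ipow_im R k * t ^+ k / k`!%:R * mxpow A k u u)
    = fun _ => 0.
  apply: funext => N; apply: big1 => k _.
  rewrite /ipow_im; case ok: (odd k); last by rewrite !mul0r.
  by rewrite mxpow_odd // mulr0.
exact: lim_cst.
Qed.

Lemma U_re_eq A u t (w d : 'I_n -> R) :
  (forall k, mxpow A k u u = \sum_j w j * d j ^+ k) ->
  U_re A t u u = \sum_j w j * cos (t * d j).
Proof.
move=> hp; rewrite /U_re.
have -> : (fun N => \sum_(0 <= k < N) ipow_re R k * t ^+ k / k`!%:R * mxpow A k u u)
    = fun N => \sum_j w j * series (cos_coeff (t * d j)) N.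
  apply: funext => N; rewrite /series /=.
  under eq_bigr do rewrite hp big_distrr /=.
  rewrite exchange_big /=; apply: eq_bigr => j _.
  rewrite big_distrr /=; apply: eq_bigr => k _.
  rewrite /cos_coeff /ipow_re /=; case: (odd k) => /=; rewrite ?exprMn -?exprnP;
    set F := k`!%:R; set S := (-1) ^+ k./2; set T := t ^+ k; set D := d j ^+ k;
    clearbody F S T D; ring.
apply: (cvg_lim (@Rhausdorff R)).
apply: (cvg_big (op := +%R) (x0 := (0:R)) (P := xpredT)); first exact: add_continuous.
move=> j _; apply: cvgMl_tmp.
have := @is_cvg_series_cos_coeff R (t * d j).
by rewrite [in X in _ -> _ --> X]unlock.
Qed.

End PartA.
Lemma mC3 (K : comPzRingType) (a b c : K) : a * (b * c) = c * (b * a).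
Proof. ring. Qed.

Section PartC.
Variable R : realType.
Local Notation C := (R[i]).
Local Notation rc := (real_complex R).

Lemma ReC (x : R) : complex.Re (rc x) = x. Proof. by []. Qed.
Lemma Re_add (x y : C) : complex.Re (x + y) = complex.Re x + complex.Re y.
Proof. by case: x => a b; case: y => c e. Qed.
Lemma Re_0 : complex.Re (0 : C) = 0. Proof. by []. Qed.
Lemma Re_sum (I : Type) (r : seq I) (P : pred I) (F : I -> C) :
  complex.Re (\sum_(i <- r | P i) F i) = \sum_(i <- r | P i) complex.Re (F i).
Proof. exact: (big_morph _ Re_add Re_0). Qed.
Lemma Re_Cmul (x : R) (z : C) : complex.Re (rc x * z) = x * complex.Re z.
Proof. by case: z => a b /=; rewrite mul0r subr0. Qed.
Lemma real_C (z : C) : z \is Num.real -> z = rc (complex.Re z).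
Proof. by move=> /RRe_real ->. Qed.
Lemma rc_real (x : R) : rc x \is Num.real.
Proof. by apply/complex_realP; exists x. Qed.

Variable n : nat.
Variable A : 'M[R]_n.
Hypothesis Asym : A^T = A.

Definition Ac := map_mx rc A.

Lemma Ac_sym i j : Ac i j = Ac j i.
Proof. by rewrite !mxE -{1}Asym mxE. Qed.

Lemma Ac_symmx : Ac \is symmetricmx.
Proof.
apply/is_hermitianmxP; rewrite expr0 scale1r.
by apply/matrixP => i j; rewrite !mxE /= -[in LHS]Asym mxE.
Qed.

Lemma Ac_real : Ac \is a mxOver Num.real.
Proof. by apply/mxOverP => i j; rewrite mxE rc_real. Qed.

Definition P := spectralmx Ac.
Definition X := spectral_diag Ac.

Lemma HA : Ac = invmx P *m diag_mx X *m P.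
Proof.
apply/orthomx_spectralP.
exact: hermitian_normalmx (realsym_hermsym Ac_symmx Ac_real).
Qed.

Lemma Punit : P \in unitmx. Proof. exact: spectral_unit. Qed.
Lemma invP : invmx P = P^t*%sesqui.
Proof. exact/invmx_unitary/spectral_unitarymx. Qed.

Lemma PPt : P *m P^t*%sesqui = 1%:M.
Proof. by rewrite -invP mulmxV // Punit. Qed.
Lemma PtP : P^t*%sesqui *m P = 1%:M.
Proof. by rewrite -invP mulVmx // Punit. Qed.

Lemma Xreal j : X 0 j \is Num.real.
Proof.
have /mxOverP := hermitian_spectral_diag_real (realsym_hermsym Ac_symmx Ac_real).
exact.
Qed.

Definition dd j := complex.Re (X 0 j).
Definition ww (u : 'I_n) j := complex.Re ((P j u)^* * P j u).

Lemma X_dd j : X 0 j = rc (dd j).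
Proof. exact/real_C/Xreal. Qed.

Lemma ww_C u j : (P j u)^* * P j u = rc (ww u j).
Proof. by apply: real_C; rewrite mulrC; apply: ger0_real; exact: mul_conjC_ge0. Qed.

Lemma ww_ge0 u j : 0 <= ww u j.
Proof. by rewrite -lecR -ww_C mulrC mul_conjC_ge0. Qed.

Lemma iter_Ac k : iter k (mulmx Ac) 1%:M
  = P^t*%sesqui *m diag_mx (\row_j (X 0 j ^+ k)) *m P.
Proof.
elim: k => [|k IH].
  have -> : \row_j (X 0 j ^+ 0) = (const_mx 1 : 'rV[C]_n) by apply/matrixP => i j; rewrite !mxE expr0.
  by rewrite diag_const_mx mulmx1 PtP.
rewrite [LHS]/= IH {1}HA invP.
rewrite !mulmxA -[P^t*%sesqui *m diag_mx X *m P *m P^t*%sesqui]mulmxA PPt mulmx1.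
rewrite -[P^t*%sesqui *m diag_mx X *m _]mulmxA mulmx_diag.
by congr (_ *m _ *m _); apply/matrixP => i j; rewrite !mxE exprS.
Qed.

Lemma map_mxpow k : map_mx rc (mxpow A k) = iter k (mulmx Ac) 1%:M.
Proof.
elim: k => [|k IH]; first exact: map_mx1.
by rewrite mxpowS map_mxM IH.
Qed.

Lemma mxpow_sum u k : mxpow A k u u = \sum_j ww u j * dd j ^+ k.
Proof.
have h2 : rc (mxpow A k u u) = (iter k (mulmx Ac) 1%:M) u u.
  by rewrite -map_mxpow mxE.
rewrite -[LHS]ReC h2.
rewrite iter_Ac !mxE Re_sum; apply: eq_bigr => j _.
rewrite mul_mx_diag !mxE X_dd.
rewrite -rmorphXn -mulrA mulrC -mulrA [P j u * _]mulrC ww_C -rmorphM.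
by rewrite ReC mulrC.
Qed.


Lemma PAc : P *m Ac = diag_mx X *m P.
Proof. by rewrite {1}HA !mulmxA mulmxV ?Punit // mul1mx. Qed.

Lemma E2 j b : X 0 j = 0 -> \sum_a Ac b a * (P j a)^* = 0.
Proof.
move=> Xj.
have h : (P *m Ac) j b = 0 by rewrite PAc mul_diag_mx mxE Xj mul0r.
have : ((P *m Ac) j b)^* = 0 by rewrite h conjC0.
move=> h'; apply: (etrans _ h').
rewrite mxE rmorph_sum; apply: eq_bigr => a _.
rewrite rmorphM /= (conj_Creal (x := Ac a b)); last by rewrite mxE rc_real.
by rewrite mulrC Ac_sym.
Qed.

Definition Zs j := X 0 j == 0.
Definition pr (u : 'I_n) : 'cV[R]_n :=
  \col_a complex.Re (\sum_(j | Zs j) (P j a)^* * P j u).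

Lemma pr_eig u : A *m pr u = 0 *: pr u.
Proof.
rewrite scale0r; apply/matrixP => b i; rewrite !mxE.
have -> : \sum_a A b a * pr u a i
    = complex.Re (\sum_a Ac b a * \sum_(j | Zs j) (P j a)^* * P j u).
  by rewrite Re_sum; apply: eq_bigr => a _; rewrite !mxE Re_Cmul.
under eq_bigr do rewrite big_distrr /=.
rewrite exchange_big /= big1 // => j Zj.
have -> : \sum_a Ac b a * ((P j a)^* * P j u) = P j u * \sum_a Ac b a * (P j a)^*.
  by rewrite big_distrr /=; apply: eq_bigr => a _; rewrite mulrA mulrC.
by rewrite E2 ?mulr0 //; apply/eqP.
Qed.

Lemma pr_orth u (x : 'cV[R]_n) : A *m x = 0 *: x -> dotv (evec R u - pr u) x = 0.
Proof.
move=> hx.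
set xc := map_mx rc x.
have Axc : Ac *m xc = 0 by rewrite /Ac /xc -map_mxM hx scale0r map_mx0.
have y0 j : ~~ Zs j -> (P *m xc) j 0 = 0.
  move=> nZ.
  have : (diag_mx X *m P *m xc) j 0 = 0 by rewrite -PAc -mulmxA Axc mulmx0 mxE.
  rewrite -mulmxA mul_diag_mx mxE => /eqP; rewrite mulf_eq0.
  by move: nZ; rewrite /Zs => /negPf -> /= /eqP.
have key : \sum_i pr u i 0 * x i 0 = x u 0.
  have -> : \sum_i pr u i 0 * x i 0
      = complex.Re (\sum_i rc (x i 0) * \sum_(j | Zs j) (P j i)^* * P j u).
    by rewrite Re_sum; apply: eq_bigr => i _; rewrite Re_Cmul mxE mulrC.
  under eq_bigr do rewrite big_distrr /=.
  rewrite exchange_big /=.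
  have -> : \sum_(j | Zs j) \sum_i rc (x i 0) * ((P j i)^* * P j u)
      = \sum_(j | Zs j) P j u * ((P *m xc) j 0)^*.
    apply: eq_bigr => j _; rewrite mxE rmorph_sum big_distrr /=.
    apply: eq_bigr => i _; rewrite rmorphM /= /xc mxE (conj_Creal (rc_real _)).
    exact: mC3.
  rewrite [X in complex.Re X = _](_ : _ = \sum_j P j u * ((P *m xc) j 0)^*); last first.
    rewrite [RHS](bigID Zs) /= [X in _ = _ + X]big1 ?addr0 // => j nZ.
    by rewrite y0 // conjC0 mulr0.
  have -> : \sum_j P j u * ((P *m xc) j 0)^* = ((P^t*%sesqui *m (P *m xc)) u 0)^*.
    rewrite mxE rmorph_sum; apply: eq_bigr => j _.
    by rewrite rmorphM /= !mxE conjCK mulrC.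
  by rewrite mulmxA PtP mul1mx mxE (conj_Creal (rc_real _)).
rewrite /dotv.
under eq_bigr do rewrite !mxE mulrBl.
have key' : \sum_i complex.Re (\sum_(j | Zs j) (P j i)^* * P j u) * x i 0 = x u 0.
  by rewrite -key; apply: eq_bigr => i _; rewrite mxE.
rewrite sumrB key' (bigD1 u) //= big1 ?addr0; first by rewrite eqxx /= mul1r subrr.
by move=> i /negPf ->; rewrite mul0r.
Qed.

Lemma pr_u u : pr u u 0 = \sum_(j | Zs j) ww u j.
Proof. by rewrite mxE Re_sum. Qed.

Lemma ww_zero u : ~ eig_support A u 0 -> forall j, dd j = 0 -> ww u j = 0.
Proof.
move=> ns j dj.
apply/eqP; rewrite eq_le ww_ge0 andbT leNgt; apply/negP => wpos.
apply: ns; exists (pr u); split; first by split; [exact: pr_eig | exact: pr_orth].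
apply/eqP => p0.
have : pr u u 0 = 0 by rewrite p0 mxE.
have Zj : Zs j by rewrite /Zs X_dd dj.
rewrite pr_u (bigD1 j) //=.
have : 0 <= \sum_(i | Zs i && (i != j)) ww u i by rewrite sumr_ge0 // => i _; exact: ww_ge0.
lra.
Qed.

End PartC.
Lemma spectral_weights (R : realType) (n : nat) (A : 'M[R]_n) (u : 'I_n) :
  weighted_graph A -> ~ eig_support A u 0 ->
  exists w d : 'I_n -> R, [/\ forall j, 0 <= w j, \sum_j w j = 1,
    forall j, d j = 0 -> w j = 0 & forall k, mxpow A k u u = \sum_j w j * d j ^+ k].
Proof.
move=> [Asym _] ns.
exists (ww R n A u), (dd R n A); split.
- by move=> j; exact: ww_ge0.
- have := mxpow_sum R n A Asym u 0.
  rewrite /mxpow /= mxE eqxx /= => h.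
  rewrite [RHS]h; apply: eq_bigr => j _; by rewrite expr0 mulr1.
- exact: ww_zero R n A Asym u ns.
- exact: mxpow_sum R n A Asym u.
Qed.
Arguments spectral_weights {R n A u}.
Local Open Scope classical_set_scope.
Theorem theorem12 (R : realType) (n : nat) (A : 'M[R]_n) (u : 'I_n) :
  weighted_graph A -> connected_graph A -> bipartite A ->
  ~ eig_support A u 0 ->
  inf [set U_abs A t u u | t in [set t : R | 0 < t]] = 0.
Proof.
move=> wg _ bip ns.
have [w [d [w0 w1 wd hp]]] := spectral_weights wg ns.
have [c c0 gc] := g_zero w0 w1 wd.
have U0 : U_abs A c u u = 0.
  rewrite /U_abs U_im0 // (U_re_eq _ _ _ _ _ _ _ hp) gc expr0n /= addr0.
  exact: sqrtr0.
set S := [set U_abs A t u u | t in [set t : R | 0 < t]].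
have S0 : S 0 by exists c.
have lb : lbound S 0 by move=> _ [t _ <-]; rewrite /U_abs sqrtr_ge0.
apply/le_anti/andP; split.
  have := ge_inf (ex_intro _ 0 lb).
  by move=> /(_ 0 S0).
apply: lb_le_inf => //.
by exists 0.
Qed.
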